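(* Let $\mathcal W=\mathcal U\text{-}\sum_n\mathcal V_n$ be a sisnis ultrafilter on $\omega^2$. Then $\mathcal W$ has a basis consisting of sets in $\mathbb P$; that is, for every $A\in\mathcal W$ there is $B\subseteq A$ with $B\in\mathcal W\cap\mathbb P$.
   Context: Ultrafilters on countably infinite sets are assumed nonprincipal (containing all cofinite sets). An ultrafilter $\mathcal U$ on $\omega$ is selective if for every function $f$ on $\omega$ there is $A\in\mathcal U$ with $f\restriction A$ one-to-one or constant. For $A\subseteq\omega^2$ and $x\in\omega$, the (vertical) section is $A(x)=\{y\in\omega:\langle x,y\rangle\in A\}$. For ultrafilters $\mathcal U,\mathcal V_n$ on $\omega$, the sum $\mathcal U\text{-}\sum_n\mathcal V_n$ is the ultrafilter $\{A\subseteq\omega^2:\{n:A(n)\in\mathcal V_n\}\in\mathcal U\}$ on $\omega^2$. A sisnis ultrafilter is one of the form $\mathcal U\text{-}\sum_n\mathcal V_n$ where $\mathcal U$ and all $\mathcal V_n$ are selective ultrafilters on $\omega$ and, for $m\neq n$, there is no permutation $f$ of $\omega$ with $f(\mathcal V_m)=\mathcal V_n$ (here $f(\mathcal V)=\{B:f^{-1}(B)\in\mathcal V\}$). $\mathbb P$ is the set of all $A\subseteq\omega^2$ such that: (1) $A$ has infinitely many infinite sections and no nonempty finite sections; (2) the sections of $A$ are pairwise disjoint; (3) every $\langle x,y\rangle\in A$ has $x<y$; (4) for any $\langle x,y\rangle,\langle x',y'\rangle\in A$, $x\neq y'$. *)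

(* Defs.v *)
From Stdlib Require Import Arith.

Definition finite_set (S : nat -> Prop) : Prop :=
  exists N, forall m, S m -> m < N.
Definition infinite_set (S : nat -> Prop) : Prop := ~ finite_set S.

Definition is_ultrafilter {X : Type} (F : (X -> Prop) -> Prop) : Prop :=
  F (fun _ => True) /\
  ~ F (fun _ => False) /\
  (forall A B : X -> Prop, F A -> (forall x, A x -> B x) -> F B) /\
  (forall A B : X -> Prop, F A -> F B -> F (fun x => A x /\ B x)) /\
  (forall A : X -> Prop, F A \/ F (fun x => ~ A x)).

Definition nonprincipal_uf (U : (nat -> Prop) -> Prop) : Prop :=
  is_ultrafilter U /\
  (forall A : nat -> Prop, finite_set (fun n => ~ A n) -> U A).

Definition selective (U : (nat -> Prop) -> Prop) : Prop :=
  nonprincipal_uf U /\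
  forall f : nat -> nat, exists A : nat -> Prop, U A /\
    ((forall x y, A x -> A y -> f x = f y -> x = y) \/
     (forall x y, A x -> A y -> f x = f y)).

Definition bijective_nat (f : nat -> nat) : Prop :=
  (forall x y, f x = f y -> x = y) /\ (forall y, exists x, f x = y).

Definition image_uf (f : nat -> nat) (V : (nat -> Prop) -> Prop)
  : (nat -> Prop) -> Prop := fun B => V (fun x => B (f x)).

(* Subsets of omega^2 in curried form: A x y means <x,y> in A; A x is
   the vertical section A(x). *)
Definition uf_sum (U : (nat -> Prop) -> Prop) (V : nat -> (nat -> Prop) -> Prop)
  : (nat -> nat -> Prop) -> Prop :=
  fun A => U (fun n => V n (A n)).

Definition sisnis (U : (nat -> Prop) -> Prop) (V : nat -> (nat -> Prop) -> Prop) : Prop :=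
  selective U /\ (forall n, selective (V n)) /\
  (forall m n, m <> n ->
     ~ exists f, bijective_nat f /\
         (forall B : nat -> Prop, image_uf f (V m) B <-> V n B)).

Definition inP (A : nat -> nat -> Prop) : Prop :=
  infinite_set (fun x => infinite_set (A x)) /\
  (forall x, finite_set (A x) -> forall y, ~ A x y) /\
  (forall x x' y, x <> x' -> A x y -> A x' y -> False) /\
  (forall x y, A x y -> x < y) /\
  (forall x y x' y', A x y -> A x' y' -> x <> y').

(* Main.v *)
Require Import Defs.
From Stdlib Require Import Arith.
From Stdlib Require Import Lia Classical IndefiniteDescription.

Lemma choice_fun {A B : Type} (R : A -> B -> Prop) :
  (forall a, exists b, R a b) -> exists f : A -> B, forall a, R a (f a).
Proof.
  intros H. exists (fun a => proj1_sig (constructive_indefinite_description _ (H a))).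
  intros a. exact (proj2_sig (constructive_indefinite_description _ (H a))).
Qed.

Lemma uf_up V : nonprincipal_uf V -> forall A B : nat -> Prop, V A -> (forall x, A x -> B x) -> V B.
Proof. intros [[_ [_ [H _]]] _]. exact H. Qed.
Lemma uf_inter V : nonprincipal_uf V -> forall A B : nat -> Prop, V A -> V B -> V (fun x => A x /\ B x).
Proof. intros [[_ [_ [_ [H _]]]] _]. exact H. Qed.
Lemma uf_compl V : nonprincipal_uf V -> forall A : nat -> Prop, V A \/ V (fun x => ~ A x).
Proof. intros [[_ [_ [_ [_ H]]]] _]. exact H. Qed.
Lemma uf_nfalse V : nonprincipal_uf V -> ~ V (fun _ => False).
Proof. intros [[_ [H _]] _]. exact H. Qed.
Lemma uf_true V : nonprincipal_uf V -> V (fun _ => True).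
Proof. intros [[H _] _]. exact H. Qed.
Lemma uf_cofin V : nonprincipal_uf V -> forall A : nat -> Prop, finite_set (fun n => ~ A n) -> V A.
Proof. intros [_ H]. exact H. Qed.

Lemma uf_not_both V : nonprincipal_uf V -> forall A, V A -> V (fun x => ~ A x) -> False.
Proof. intros HV A H1 H2. apply (uf_nfalse V HV).
  apply (uf_up V HV _ _ (uf_inter V HV _ _ H1 H2)). intros x [a b]. exact (b a). Qed.

Lemma uf_nonempty V : nonprincipal_uf V -> forall A, V A -> exists x, A x.
Proof. intros HV A H. apply NNPP. intro Hn. apply (uf_nfalse V HV).
  apply (uf_up V HV _ _ H). intros x Hx. apply Hn. exists x. exact Hx. Qed.

Lemma finite_sub (P Q : nat -> Prop) : (forall x, P x -> Q x) -> finite_set Q -> finite_set P.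
Proof. intros H [N HN]. exists N. intros m Hm. apply HN, H, Hm. Qed.

Lemma uf_infinite V : nonprincipal_uf V -> forall A, V A -> infinite_set A.
Proof. intros HV A H [N HN]. apply (uf_not_both V HV A H).
  apply (uf_cofin V HV). exists N. intros m Hm. apply HN. apply NNPP. exact Hm. Qed.

Lemma cofin_sub V : nonprincipal_uf V -> forall Y Z : nat -> Prop, V Y ->
  finite_set (fun y => Y y /\ ~ Z y) -> V Z.
Proof. intros HV Y Z HY Hf.
  assert (HC : V (fun y => ~ (Y y /\ ~ Z y))).
  { apply (uf_cofin V HV). apply (finite_sub _ _ (fun y h => NNPP _ h) Hf). }
  apply (uf_up V HV _ _ (uf_inter V HV _ _ HY HC)).
  intros y [h1 h2]. apply NNPP. intro h3. apply h2. split; assumption. Qed.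

Lemma uf_fin_inter V : nonprincipal_uf V -> forall (G : nat -> nat -> Prop) n,
  (forall m, m < n -> V (G m)) -> V (fun y => forall m, m < n -> G m y).
Proof. intros HV G n. induction n as [|n IH]; intros H.
  - apply (uf_up V HV _ _ (uf_true V HV)). intros y _ m Hm. lia.
  - assert (H1 : V (fun y => forall m, m < n -> G m y)) by (apply IH; intros m Hm; apply H; lia).
    apply (uf_up V HV _ _ (uf_inter V HV _ _ H1 (H n (Nat.lt_succ_diag_r n)))).
    intros y [h1 h2] m Hm. destruct (Nat.eq_dec m n) as [->|Hne]. exact h2. apply h1. lia.
Qed.

Lemma pigeon (f : nat -> nat) : forall k (P : nat -> Prop),
  (forall x y, P x -> P y -> f x = f y -> x = y) -> (forall y, P y -> f y < k) -> finite_set P.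
Proof. induction k as [|k IH]; intros P Hinj Hb.
  - exists 0. intros m Hm. specialize (Hb m Hm). lia.
  - destruct (classic (exists y0, P y0 /\ f y0 = k)) as [[y0 [Hy0 Hfy0]] | Hno].
    + destruct (IH (fun y => P y /\ y <> y0)) as [N HN].
      * intros x y [hx _] [hy _]. apply Hinj; assumption.
      * intros y [hy hne]. specialize (Hb y hy). assert (f y <> k).
        { intro e. apply hne. apply Hinj; try assumption. congruence. } lia.
      * exists (N + y0 + 1). intros m Hm. destruct (Nat.eq_dec m y0) as [e|ne]. lia.
        specialize (HN m (conj Hm ne)). lia.
    + apply IH; [exact Hinj|]. intros y hy. specialize (Hb y hy).
      assert (f y <> k). { intro e. apply Hno. exists y. split; assumption. } lia.
Qed.

Lemma least_ex (P : nat -> Prop) : (exists k, P k) -> exists k, P k /\ forall j, P j -> k <= j.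
Proof. intros [n Hn]. revert Hn. induction n as [n IH] using lt_wf_ind. intros Hn.
  destruct (classic (exists j, j < n /\ P j)) as [[j [Hj HPj]]|Hno].
  - exact (IH j Hj HPj).
  - exists n. split; [exact Hn|]. intros j Hj.
    destruct (le_gt_dec n j); auto. exfalso; apply Hno; exists j; auto.
Qed.

Lemma ppoint V : selective V -> forall X : nat -> nat -> Prop, (forall k, V (X k)) ->
  exists Y, V Y /\ forall k, finite_set (fun y => Y y /\ ~ X k y).
Proof. intros [HV Hsel] X HX.
  destruct (classic (V (fun y => forall k, X k y))) as [HZ|HnZ].
  - exists (fun y => forall k, X k y). split; [exact HZ|]. intros k. exists 0.
    intros m [h1 h2]. exfalso. exact (h2 (h1 k)).
  - assert (HcZ : V (fun y => ~ forall k, X k y)).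
    { destruct (uf_compl V HV (fun y => forall k, X k y)); [contradiction|assumption]. }
    assert (Hf : exists f : nat -> nat, forall y, (~ forall k, X k y) -> ~ X (f y) y /\ forall j, ~ X j y -> f y <= j).
    { apply (choice_fun (fun y v => (~ forall k, X k y) -> ~ X v y /\ forall j, ~ X j y -> v <= j)).
      intros y. destruct (classic (forall k, X k y)) as [Hy|Hy].
      - exists 0. intro h; contradiction.
      - destruct (least_ex (fun k => ~ X k y)) as [v [Hv1 Hv2]].
        + apply not_all_ex_not in Hy. exact Hy.
        + exists v. intros _. split; assumption. }
    destruct Hf as [f Hf].
    destruct (Hsel f) as [A' [HA' [Hinj|Hconst]]].
    + exists (fun y => A' y /\ ~ forall k, X k y). split. apply (uf_inter V HV); assumption.
      intros k. apply (pigeon f (S k)).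
      * intros x y [[hx _] _] [[hy _] _]. apply Hinj; assumption.
      * intros y [[hy hz] hk]. pose proof (proj2 (Hf y hz) k hk). lia.
    + exfalso. pose proof (uf_inter V HV _ _ HA' HcZ) as HS.
      destruct (uf_nonempty V HV _ HS) as [y0 [h0a h0z]].
      apply (uf_not_both V HV (X (f y0)) (HX (f y0))).
      apply (uf_up V HV _ _ HS). intros y [hy hz].
      rewrite (Hconst y0 y h0a hy). exact (proj1 (Hf y hz)).
Qed.

Lemma distinct U V : sisnis U V -> forall m n, (forall B, V m B <-> V n B) -> m = n.
Proof. intros [_ [_ H]] m n Heq. apply NNPP. intro hne. apply (H m n hne).
  exists (fun x => x). split. split; [auto | intros y; exists y; reflexivity].
  intros B. unfold image_uf. apply Heq. Qed.

Lemma sep U V : sisnis U V -> forall n k, k <> n -> exists T, V n T /\ ~ V k T.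
Proof. intros Hs n k hne.
  assert (HVn : nonprincipal_uf (V n)) by (destruct Hs as [_ [H _]]; exact (proj1 (H n))).
  assert (HVk : nonprincipal_uf (V k)) by (destruct Hs as [_ [H _]]; exact (proj1 (H k))).
  destruct (classic (exists B, ~ (V k B <-> V n B))) as [[B HB]|Hno].
  - destruct (classic (V n B)) as [h|h].
    + exists B. split; [exact h|]. intro h'. apply HB. split; intros; assumption.
    + exists (fun x => ~ B x). split.
      * destruct (uf_compl _ HVn B); [contradiction|assumption].
      * intro h'. apply HB. split; intro h2.
        -- exfalso; exact (uf_not_both _ HVk B h2 h').
        -- contradiction.
  - exfalso. apply hne. apply (distinct U V Hs). intros B. apply NNPP. intro h. apply Hno. exists B. exact h.
Qed.

Theorem mainTheorem1 :
  forall (U : (nat -> Prop) -> Prop) (V : nat -> (nat -> Prop) -> Prop),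
    sisnis U V ->
    forall A : nat -> nat -> Prop, uf_sum U V A ->
      exists B : nat -> nat -> Prop,
        (forall x y, B x y -> A x y) /\ uf_sum U V B /\ inP B.
Proof.
  intros U V Hs A HA.
  pose proof Hs as [HU [HVs _]].
  assert (HUn : nonprincipal_uf U) by exact (proj1 HU).
  assert (HVn : forall n, nonprincipal_uf (V n)) by (intro n; exact (proj1 (HVs n))).
  assert (HT : exists T : nat -> nat -> nat -> Prop, forall n k, V n (T n k) /\ (k <> n -> ~ V k (T n k))).
  { assert (H1 : forall n, exists Tn : nat -> nat -> Prop, forall k, V n (Tn k) /\ (k <> n -> ~ V k (Tn k))).
    { intros n. apply (choice_fun (fun k T => V n T /\ (k <> n -> ~ V k T))). intros k.
      destruct (Nat.eq_dec k n) as [->|hne].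
      - exists (fun _ => True). split; [apply uf_true, HVn | intros h; congruence].
      - destruct (sep U V Hs n k hne) as [T [h1 h2]]. exists T. split; auto. }
    apply (choice_fun _ H1). }
  destruct HT as [T HT].
  assert (HS : exists Sx : nat -> nat -> Prop, forall n, V n (Sx n) /\ forall k, k <> n -> V k (fun y => ~ Sx n y)).
  { apply (choice_fun (fun n Sn => V n Sn /\ forall k, k <> n -> V k (fun y => ~ Sn y))). intros n.
    destruct (ppoint (V n) (HVs n) (T n) (fun k => proj1 (HT n k))) as [Sn [h1 h2]].
    exists Sn. split; [exact h1|]. intros k hne.
    destruct (uf_compl _ (HVn k) Sn) as [h|h]; [|exact h].
    exfalso. apply (proj2 (HT n k) hne). exact (cofin_sub _ (HVn k) Sn (T n k) h (h2 k)). }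
  destruct HS as [Sx HS].
  assert (HE : exists En : nat -> nat -> Prop, forall n, U (En n) /\ ((exists F, U F /\ V n (fun y => ~ F y)) -> V n (fun y => ~ En n y))).
  { apply (choice_fun (fun n F => U F /\ ((exists F', U F' /\ V n (fun y => ~ F' y)) -> V n (fun y => ~ F y)))).
    intros n. destruct (classic (exists F', U F' /\ V n (fun y => ~ F' y))) as [[F [h1 h2]]|hno].
    - exists F. split; [exact h1|]. intros _. exact h2.
    - exists (fun _ => True). split; [apply uf_true, HUn|]. intro h; contradiction. }
  destruct HE as [En HE].
  destruct (ppoint U HU En (fun n => proj1 (HE n))) as [E [HE1 HE2]].
  assert (HEn : forall n, (exists F, U F /\ V n (fun y => ~ F y)) -> V n (fun y => ~ E y)).
  { intros n h. apply (cofin_sub _ (HVn n) (fun y => ~ En n y)).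
    - exact (proj2 (HE n) h).
    - eapply finite_sub; [|exact (HE2 n)]. intros y hy. destruct hy as [h1 h2].
      split; [apply NNPP; exact h2 | exact h1]. }
  assert (HG : U (fun n => V n (fun y => ~ E y))).
  { destruct (uf_compl U HUn (fun n => V n (fun y => ~ E y))) as [h|h]; [exact h|exfalso].
    assert (Hsub : forall n, ~ V n (fun y => ~ E y) -> forall F, U F -> V n F).
    { intros n hn F hF. destruct (uf_compl _ (HVn n) F) as [h'|h']; [exact h'|].
      exfalso. apply hn. apply HEn. exists F. split; assumption. }
    assert (Hagree : forall n, ~ V n (fun y => ~ E y) -> forall B, V n B <-> U B).
    { intros n hn B. split; intro hB.
      - destruct (uf_compl U HUn B) as [h'|h']; [exact h'|]. exfalso.
        exact (uf_not_both _ (HVn n) B hB (Hsub n hn _ h')).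
      - exact (Hsub n hn B hB). }
    destruct (uf_nonempty U HUn _ h) as [n0 hn0].
    assert (h2 : U (fun m => ~ V m (fun y => ~ E y) /\ m <> n0)).
    { apply (uf_inter U HUn); [exact h|]. apply (uf_cofin U HUn). exists (S n0).
      intros m hm. apply NNPP in hm. lia. }
    destruct (uf_nonempty U HUn _ h2) as [m0 [hm0 hne]].
    apply hne. apply (distinct U V Hs). intros B.
    rewrite (Hagree m0 hm0 B), (Hagree n0 hn0 B). tauto. }
  set (D := fun n => V n (A n) /\ E n /\ V n (fun y => ~ E y)).
  assert (HD : U D).
  { unfold D. apply (uf_inter U HUn); [exact HA|]. apply (uf_inter U HUn); assumption. }
  set (B := fun n y => D n /\ A n y /\ Sx n y /\ n < y /\ ~ E y /\ (forall m, m < n -> ~ Sx m y)).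
  assert (HBV : forall n, D n -> V n (B n)).
  { intros n hn. pose proof hn as [hA [hE hG]].
    apply (uf_up _ (HVn n) (fun y => A n y /\ Sx n y /\ n < y /\ ~ E y /\ (forall m, m < n -> ~ Sx m y))).
    2: { intros y hy. unfold B. split; [exact hn|exact hy]. }
    apply (uf_inter _ (HVn n)); [exact hA|].
    apply (uf_inter _ (HVn n)); [exact (proj1 (HS n))|].
    apply (uf_inter _ (HVn n)).
    { apply (uf_cofin _ (HVn n)). exists (S n). intros m hm. lia. }
    apply (uf_inter _ (HVn n)); [exact hG|].
    apply (uf_fin_inter _ (HVn n) (fun m y => ~ Sx m y)). intros m hm. apply (proj2 (HS m)). lia. }
  exists B. split; [|split].
  - intros x y h. destruct h as (_ & h & _). exact h.
  - apply (uf_up U HUn D); [exact HD|]. intros n hn. exact (HBV n hn).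
  - unfold inP. split; [|split; [|split; [|split]]].
    + intros hfin. apply (uf_infinite U HUn D HD). eapply finite_sub; [|exact hfin].
      intros x hx. apply (uf_infinite _ (HVn x) _ (HBV x hx)).
    + intros x hfin y hB. destruct hB as (hD & _).
      exact (uf_infinite _ (HVn x) _ (HBV x hD) hfin).
    + intros x x' y hne h1 h2.
      destruct h1 as (_ & _ & hS1 & _ & _ & hm1).
      destruct h2 as (_ & _ & hS2 & _ & _ & hm2).
      destruct (Nat.lt_total x x') as [hl|[he|hl]].
      * exact (hm2 x hl hS1).
      * contradiction.
      * exact (hm1 x' hl hS2).
    + intros x y h. destruct h as (_ & _ & _ & h & _). exact h.
    + intros x y x' y' h1 h2 e.
      destruct h1 as ((_ & hE & _) & _).
      destruct h2 as (_ & _ & _ & _ & hE2 & _).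
      apply hE2. rewrite <- e. exact hE.
Qed.
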